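(* Assume $l=-\infty$ and $r=\infty$. The following are equivalent: (a) there exists $y\in I$ such that $G_y(a)<\infty$ for all $a>0$; (b) $G_y(a)<\infty$ for all $y\in I$ and all $a>0$.
   Context: Let $-\infty\le l<r\le\infty$, $I=(l,r)$, $\eta\colon\mathbb R\to\mathbb R$ Borel with $\eta\ne0$ on $I$, $1/\eta^2\in L^1_{\mathrm{loc}}(I)$, $\eta=0$ off $I$. For $y\in I$, $x\in\mathbb R$, $q(y,x)=\int_y^x\int_y^u\frac{2}{\eta^2(z)}\,dz\,du\in[0,\infty]$. Let $\mu\ne\delta_0$ be a centered probability measure on $\mathbb R$ with finite first moment. For $y\in I$, $a\ge0$, $G_y(a)=\int_{\mathbb R} q(y,y+ax)\,\mu(dx)\in[0,\infty]$. *)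

(* Defs.v *)
From HB Require Import structures.
From mathcomp Require Import all_boot all_order all_algebra.
From mathcomp Require Import all_classical all_reals all_analysis.
Set Implicit Arguments. Unset Strict Implicit. Unset Printing Implicit Defensive.
Import Order.TTheory GRing.Theory Num.Theory.
Local Open Scope classical_set_scope.
Local Open Scope ring_scope.
Local Open Scope ereal_scope.

Definition oint {R : realType} (a b : R) (f : R -> \bar R) : \bar R :=
  if (a <= b)%R then \int[@lebesgue_measure R]_(x in `[a, b]) f x
  else - \int[@lebesgue_measure R]_(x in `[b, a]) f x.

Definition qfun {R : realType} (eta : R -> R) (y x : R) : \bar R :=
  oint y x (fun u => oint y u (fun z => (2 / (eta z ^+ 2))%:E)).

Definition Gfun {R : realType} (eta : R -> R)
    (mu : probability R R) (y a : R) : \bar R :=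
  \int[mu]_x qfun eta y (y + a * x)%R.

(* Main.v *)
Require Import Defs.
From HB Require Import structures.
From mathcomp Require Import all_boot all_order all_algebra.
From mathcomp Require Import all_classical all_reals all_analysis.
From mathcomp Require Import ring lra measurable_realfun.
Import Order.TTheory GRing.Theory Num.Theory.
Local Open Scope classical_set_scope.
Local Open Scope ring_scope.

Section S.
Context {R : realType}.
Notation mu := (@lebesgue_measure R).
Definition I (h : R -> R) (a b : R) : R :=
  if a <= b then \int[mu]_(x in `[a, b]) h x else - \int[mu]_(x in `[b, a]) h x.
Definition locint (h : R -> R) := forall a b : R, mu.-integrable `[a, b] (EFin \o h).

Lemma I_aa h a : I h a a = 0.
Proof. by rewrite /I lexx set_itv1 Rintegral_set1. Qed.

Lemma I_sym h a b : I h a b = - I h b a.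
Proof.
rewrite /I; case: (ltgtP a b) => ab /=.
- by rewrite opprK.
- by [].
- by rewrite ab set_itv1 Rintegral_set1 oppr0.
Qed.

Lemma I_chasles_ord h a b c : locint h -> a <= b -> b <= c ->
  I h a c = I h a b + I h b c.
Proof.
move=> hi ab bc; rewrite /I ab bc (le_trans ab bc).
have := @Rintegral_itvB R h (BLeft a) (BRight c) b (hi a c).
rewrite !bnd_simp => /(_ ab bc) E.
rewrite Rintegral_itv_obnd_cbnd in E; last first.
  apply: integrableS (hi b c) => //; apply: subset_itvr; rewrite bnd_simp.
  done.
by rewrite -E addrC subrK.
Qed.

Lemma I_chasles h a b c : locint h -> I h a c = I h a b + I h b c.
Proof.
move=> hi.
have S1 := I_sym h a b; have S2 := I_sym h b c; have S3 := I_sym h a c.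
have O := fun x y z => @I_chasles_ord h x y z hi.
case: (leP a b) => ab; case: (leP b c) => bc.
- exact: O.
- case: (leP a c) => ac.
  + have := O a c b ac (ltW bc); lra.
  + have := O c a b (ltW ac) ab; lra.
- case: (leP a c) => ac.
  + have := O b a c (ltW ab) ac; lra.
  + have := O b c a bc (ltW ac); lra.
- have := O c b a (ltW bc) (ltW ab); lra.
Qed.

Lemma locint_fin h a b : locint h ->
  (\int[mu]_(x in `[a, b]) (h x)%:E)%E \is a fin_num.
Proof. by move=> hi; apply: integrable_fin_num => //; exact: hi. Qed.

Lemma oint_I h a b : locint h -> oint a b (fun x => (h x)%:E) = (I h a b)%:E.
Proof.
move=> hi; rewrite /oint /I; case: ifP => _.
  by rewrite /Rintegral fineK //; exact: locint_fin.
by rewrite EFinN /Rintegral fineK //; exact: locint_fin.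
Qed.

Lemma cst_locint c : locint (cst c).
Proof.
move=> a' b'; apply: continuous_compact_integrable; first exact: segment_compact.
by move=> x; apply: continuous_subspaceT => z; exact: cst_continuous.
Qed.

Lemma I_ge0 h a b : locint h -> a <= b -> (forall x, a <= x <= b -> 0 <= h x) -> 0 <= I h a b.
Proof.
move=> hi ab h0; rewrite /I ab; apply: Rintegral_ge0 => x /=.
by rewrite in_itv /=; exact: h0.
Qed.

Lemma I_le0 h a b : locint h -> a <= b -> (forall x, a <= x <= b -> h x <= 0) -> I h a b <= 0.
Proof.
move=> hi ab h0; rewrite /I ab.
rewrite (@le_trans _ _ (\int[mu]_(x in `[a, b]) (cst 0 x)))//.
  apply: le_Rintegral => //; first exact: cst_locint.
by rewrite Rintegral_cst // mul0r.
Qed.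

Lemma nd_locint f : {homo f : x y / x <= y} -> locint f.
Proof.
move=> fnd a b; apply: measurable_bounded_integrable => //.
- by apply: compact_finite_measure; exact: segment_compact.
- exact: nondecreasing_measurable.
- exists (`|f a| + `|f b|); split; first by rewrite num_real.
  move=> M hM x; rewrite /= in_itv /= => /andP[ax xb].
  have h1 := fnd _ _ ax; have h2 := fnd _ _ xb.
  apply: le_trans (ltW hM).
  rewrite ler_norml; apply/andP; split.
    apply: le_trans h1; rewrite lerNl; apply: le_trans (ler_norm _) _.
    rewrite normrN lerDl; exact: normr_ge0.
  apply: (le_trans h2); apply: le_trans (ler_norm _) _.
  rewrite lerDr; exact: normr_ge0.
Qed.

Lemma mu_itv_len a b : a <= b -> fine (mu `[a, b]) = b - a.
Proof.
move=> ab; rewrite lebesgue_measure_itv /= lte_fin.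
case: ifP => [_|/negbT]; first by rewrite -EFinD.
rewrite -leNgt => ba.
have -> : a = b by apply/le_anti; rewrite ab ba.
by rewrite subrr.

Qed.

Lemma I_cst_add h c a b : locint h ->
  I (fun u => h u + c) a b = I h a b + c * (b - a).
Proof.
move=> hi.
have ci := cst_locint c.
rewrite /I; case: ifP => ab.
  by rewrite RintegralD // Rintegral_cst // mu_itv_len.
have ba : b <= a by rewrite ltW // ltNge ab.
by rewrite RintegralD // Rintegral_cst // mu_itv_len // opprD -mulrN opprB.
Qed.
End S.

Section T.
Context {R : realType} (eta : R -> R).
Notation mu := (@lebesgue_measure R).
Hypothesis eta_loc : forall a b : R,
      (@lebesgue_measure R).-integrable `[a, b] (fun z => (1 / (eta z ^+ 2))%:E).

Definition g (z : R) : R := 2 / (eta z ^+ 2).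

Lemma g_ge0 z : 0 <= g z.
Proof. by rewrite /g divr_ge0 // sqr_ge0. Qed.

Lemma g_locint : locint g.
Proof.
move=> a b; have := integrableZl _ 2 (eta_loc a b).
move=> /(_ (measurable_itv _)); apply: eq_integrable => //.
by move=> z _ /=; rewrite -EFinM /g mul1r.
Qed.

Definition F (y u : R) : R := I g y u.

Lemma F_nd y : {homo F y : u v / u <= v}.
Proof.
move=> u v uv; rewrite /F (I_chasles g y u v g_locint) lerDl.
by apply: I_ge0 => // [|x _]; [exact: g_locint|exact: g_ge0].
Qed.

Lemma F_locint y : locint (F y).
Proof. exact/nd_locint/F_nd. Qed.

Definition Q (y x : R) : R := I (F y) y x.

Lemma qfunE y x : qfun eta y x = (Q y x)%:E.
Proof.
rewrite /qfun.
have -> : (fun u => oint y u (fun z => (2 / (eta z ^+ 2))%:E)) = (fun u => (F y u)%:E).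
  by apply/funext => u; rewrite /F -oint_I //; exact: g_locint.
by rewrite oint_I //; exact: F_locint.
Qed.

Lemma Q_yy y : Q y y = 0.
Proof. exact: I_aa. Qed.

Lemma Q_r y x1 x2 : y <= x1 -> x1 <= x2 -> Q y x1 <= Q y x2.
Proof.
move=> yx1 x12; rewrite /Q (I_chasles (F y) y x1 x2 (F_locint y)) lerDl.
apply: I_ge0 => // [|x /andP[h1 _]]; first exact: F_locint.
rewrite -(I_aa g y); apply: F_nd; exact: le_trans h1.
Qed.

Lemma Q_l y x1 x2 : x1 <= y -> x2 <= x1 -> Q y x1 <= Q y x2.
Proof.
move=> yx1 x12; rewrite /Q (I_chasles (F y) y x1 x2 (F_locint y)) (I_sym (F y) x1 x2).
rewrite lerDl oppr_ge0.
apply: I_le0 => // [|x /andP[_ h1]]; first exact: F_locint.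
rewrite -(I_aa g y); apply: F_nd; exact: le_trans yx1.
Qed.

Lemma Q_ge0 y x : 0 <= Q y x.
Proof.
rewrite -(Q_yy y); case: (leP y x) => yx; first exact: Q_r.
by apply: Q_l => //; exact: ltW.
Qed.


Lemma Q_shift y y' x :
  Q y' x = Q y x - F y y' * (x - y) - I (F y') y y'.
Proof.
set c := F y y'.
have E : F y = fun u => F y' u + c.
  by apply/funext => u; rewrite /c /F (I_chasles g y y' u g_locint) addrC.
rewrite /Q E I_cst_add; last exact: F_locint.
rewrite (I_chasles (F y') y y' x (F_locint y')); lra.
Qed.

Lemma Q_bound y w s :
  Q y (y + w + s) <= Q y (y + 2 * w) + (Q y (y + 2 * `|s|) + Q y (y - 2 * `|s|)).
Proof.
have h1 := ler_norm s; have h2 : - s <= `|s| by rewrite -normrN ler_norm.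
have q1 := Q_ge0 y (y + 2 * w); have q2 := Q_ge0 y (y + 2 * `|s|);
have q3 := Q_ge0 y (y - 2 * `|s|).
case: (leP `|s| w) => hw.
  have : Q y (y + w + s) <= Q y (y + 2 * w) by apply: Q_r; lra.
  lra.
case: (leP w (- `|s|)) => hw'.
  have : Q y (y + w + s) <= Q y (y + 2 * w) by apply: Q_l; lra.
  lra.
case: (leP 0 (w + s)) => hws.
  have : Q y (y + w + s) <= Q y (y + 2 * `|s|) by apply: Q_r; lra.
  lra.
have : Q y (y + w + s) <= Q y (y - 2 * `|s|) by apply: Q_l; lra.
lra.
Qed.

Lemma Q_meas y : measurable_fun setT (Q y).
Proof.
have -> : Q y = (fun x => Q y (Num.max x y) + Q y (Num.min x y)).
  apply/funext => x; case: (leP x y) => xy.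
    by rewrite Q_yy add0r.
  by rewrite Q_yy addr0.
apply: measurable_funD.
  apply: nondecreasing_measurable => // u v uv.
  apply: Q_r; first by rewrite le_max lexx orbT.
  by rewrite ge_max !le_max uv lexx orbT.
apply: nonincreasing_measurable => // u v uv.
apply: Q_l; first by rewrite ge_min lexx orbT.
by rewrite le_min !ge_min uv lexx orbT.
Qed.

End T.

Local Open Scope ereal_scope.

Lemma affine_meas (R : realType) (b k : R) :
  measurable_fun setT (fun x : R => (b + k * x)%R).
Proof.
apply: measurable_funD.
- by [].
- by apply: measurable_funM.
Qed.

Theorem mainTheorem2 (R : realType) (eta : R -> R) (mu : probability R R)
  (eta_meas : measurable_fun setT eta)
  (eta_ne0 : forall x : R, eta x != 0%R)
  (eta_loc : forall a b : R,
      (@lebesgue_measure R).-integrable `[a, b] (fun z => (1 / (eta z ^+ 2))%:E))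
  (mu_int : mu.-integrable setT (fun x : R => x%:E))
  (mu_centered : \int[mu]_x (x%:E) = 0)
  (mu_not_dirac : exists A : set R, measurable A /\ mu A <> \d_(0%R : R) A) :
  (exists y : R, forall a : R, (0 < a)%R -> Gfun eta mu y a < +oo) <->
  (forall y a : R, (0 < a)%R -> Gfun eta mu y a < +oo).
Proof.
split; last by move=> H; exists 0%R => b; exact: H.
move=> [y Hy] y' a a0.
have GE : forall z b, Gfun eta mu z b = \int[mu]_x (Q eta z (z + b * x)%R)%:E.
  move=> z b; rewrite /Gfun; apply: eq_integral => x _.
  exact: qfunE.
have Qm : forall z b k, measurable_fun setT (fun x : R => (Q eta z (b + k * x)%R)%:E).
  move=> z b k; apply/measurable_EFinP.
  apply: measurableT_comp; [exact: Q_meas | exact: affine_meas].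
have a20 : (0 < 2 * a)%R by rewrite mulr_gt0.
have Hq := Hy _ a20; rewrite GE in Hq.
have iq : mu.-integrable setT (fun x => (Q eta y (y + (2 * a) * x)%R)%:E).
  apply/integrableP; split; first exact: Qm.
  apply: le_lt_trans Hq; rewrite le_eqVlt; apply/orP; left; apply/eqP.
  apply: eq_integral => x _; rewrite gee0_abs // lee_fin; exact: Q_ge0.
pose c := F eta y y'; pose d := I (F eta y') y y'; pose s := (y' - y)%R.
pose K0 := (Q eta y (y + 2 * `|s|) + Q eta y (y - 2 * `|s|) + `|c| * `|s| + `|d|)%R.
pose C1 := (`|c| * a)%R.
pose h := fun x : R => ((Q eta y (y + (2 * a) * x)%R)%:E + ((EFin \o cst K0) x + C1%:E * (abse \o EFin) x)).
have ih : mu.-integrable setT h.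
  apply: integrableD => //; apply: integrableD => //.
    exact: finite_measure_integrable_cst.
  apply: integrableZl => //; exact: integrable_abse.
rewrite GE; apply: le_lt_trans (integrable_lty _ ih) => //.
apply: ge0_le_integral => //.
- by move=> x _; rewrite lee_fin; exact: Q_ge0.
- exact: measurable_int ih.
move=> x _; rewrite /h /= -EFinM -!EFinD lee_fin.
have S := @Q_shift _ eta eta_loc y y' (y' + a * x)%R; rewrite -/c -/d in S.
have B := @Q_bound _ eta eta_loc y (a * x) s.
have e1 : (y + a * x + s = y' + a * x)%R by rewrite /s; ring.
rewrite e1 mulrA in B.
have T1 : (- (c * (y' + a * x - y)) <= `|c| * a * `|x| + `|c| * `|s|)%R.
  have -> : (y' + a * x - y = a * x + s)%R by rewrite /s; ring.
  have h1 : (- (c * (a * x + s)) <= `|c| * `|a * x + s|)%R.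
    by rewrite -normrM -normrN ler_norm.
  have h2 : (`|a * x + s| <= a * `|x| + `|s|)%R.
    by apply: le_trans (ler_normD _ _) _; rewrite normrM (gtr0_norm a0).
  apply: le_trans h1 _; rewrite -mulrA -mulrDr; apply: ler_wpM2l => //.
have T2 : (- d <= `|d|)%R by rewrite -normrN ler_norm.
rewrite S; apply: (le_trans (lerD (lerD B T1) T2)).
rewrite /K0 /C1 le_eqVlt; apply/orP; left; apply/eqP; ring.
Qed.
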